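(* Let $n\ge1$ be an integer and let $\underline\psi_1,\dots,\underline\psi_n\in[0,1]$ satisfy $\underline\psi_n\le n/(n+1)$ and \[ \frac{\underline\psi_j}{j}\le\frac{\underline\psi_{j+1}}{j+1}\quad\text{and}\quad \frac{1-\underline\psi_j}{n+1-j}\le\frac{1-\underline\psi_{j+1}}{n-j}\qquad(1\le j\le n-1). \] Then there exists a finite non-empty subset $E$ of $\bar\Delta^{(n+1)}$ such that $\underline\psi_j=\min\psi_j(E)$ for each $j=1,\dots,n$.
   Context: $\bar\Delta^{(n+1)}=\{(a_1,\dots,a_{n+1})\in\mathbb{R}^{n+1}: 0\le a_1\le\cdots\le a_{n+1},\ a_1+\cdots+a_{n+1}=1\}$; for $j=1,\dots,n+1$, $\psi_j\colon\bar\Delta^{(n+1)}\to\mathbb{R}$ is $\psi_j(a_1,\dots,a_{n+1})=a_1+\cdots+a_j$. *)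

(* Defs.v *)
From Stdlib Require Import Reals List.
Open Scope R_scope.

Fixpoint sum1 (a : nat -> R) (j : nat) : R :=
  match j with
  | O => 0
  | S k => sum1 a k + a (S k)
  end.

(* Points of Delta-bar^{(n+1)} are represented as a : nat -> R, using
   coordinates a 1, ..., a (n+1) (other values are irrelevant). *)
Definition in_Delta (n : nat) (a : nat -> R) : Prop :=
  0 <= a 1%nat /\
  (forall i : nat, (1 <= i <= n)%nat -> a i <= a (S i)) /\
  sum1 a (S n) = 1.

Definition psi (j : nat) (a : nat -> R) : R := sum1 a j.

Definition is_min_on (E : list (nat -> R)) (f : (nat -> R) -> R) (m : R) : Prop :=
  (exists e, In e E /\ f e = m) /\ (forall e, In e E -> m <= f e).

(* Main.v *)
Require Import Defs.
From Stdlib Require Import Reals List Lra Lia.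
Open Scope R_scope.

Definition ept (n : nat) (p : nat -> R) (j : nat) : nat -> R :=
  fun i => if Nat.leb i j then p j / INR j else (1 - p j) / INR (S n - j).

Lemma sum_low n p j : forall k, (k <= j)%nat ->
  sum1 (ept n p j) k = INR k * (p j / INR j).
Proof.
  induction k; intros Hk; cbn [sum1].
  - simpl; ring.
  - rewrite IHk by lia. unfold ept.
    replace (Nat.leb (S k) j) with true by (symmetry; apply Nat.leb_le; lia).
    rewrite S_INR; ring.
Qed.

Lemma sum_high n p j : forall m,
  sum1 (ept n p j) (j + m) = INR j * (p j / INR j) + INR m * ((1 - p j) / INR (S n - j)).
Proof.
  induction m.
  - rewrite Nat.add_0_r, sum_low by lia. simpl; ring.
  - rewrite Nat.add_succ_r; cbn [sum1]. rewrite IHm. unfold ept.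
    replace (Nat.leb (S (j + m)) j) with false by (symmetry; apply Nat.leb_gt; lia).
    rewrite S_INR; ring.
Qed.

Section Chain.
Variable n : nat.
Variable p : nat -> R.
Hypothesis H4 : forall j : nat, (1 <= j <= n - 1)%nat ->
     p j / INR j <= p (S j) / INR (S j) /\
     (1 - p j) / INR (S n - j) <= (1 - p (S j)) / INR (n - j).

Lemma chain1d : forall d k, (1 <= k)%nat -> (k + d <= n)%nat ->
  p k / INR k <= p (k + d) / INR (k + d).
Proof.
  induction d; intros k Hk Hkd.
  - rewrite Nat.add_0_r; lra.
  - eapply Rle_trans. apply IHd; lia.
    rewrite Nat.add_succ_r. apply (H4 (k + d)); lia.
Qed.

Lemma chain2d : forall d k, (1 <= k)%nat -> (k + d <= n)%nat ->
  (1 - p k) / INR (S n - k) <= (1 - p (k + d)) / INR (S n - (k + d)).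
Proof.
  induction d; intros k Hk Hkd.
  - rewrite Nat.add_0_r; lra.
  - eapply Rle_trans. apply IHd; lia.
    rewrite Nat.add_succ_r. replace (S n - S (k + d))%nat with (n - (k + d))%nat by lia.
    apply (H4 (k + d)); lia.
Qed.

Lemma chain1 k j : (1 <= k)%nat -> (k <= j <= n)%nat -> p k / INR k <= p j / INR j.
Proof. intros. replace j with (k + (j - k))%nat by lia. apply chain1d; lia. Qed.

Lemma chain2 k j : (1 <= k)%nat -> (k <= j <= n)%nat ->
  (1 - p k) / INR (S n - k) <= (1 - p j) / INR (S n - j).
Proof. intros. replace j with (k + (j - k))%nat by lia. apply chain2d; lia. Qed.
End Chain.

Lemma INR_pos k : (1 <= k)%nat -> 0 < INR k.
Proof. intros; apply lt_0_INR; lia. Qed.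

Theorem mainTheorem11 (n : nat) (p : nat -> R) :
  (1 <= n)%nat ->
  (forall j : nat, (1 <= j <= n)%nat -> 0 <= p j <= 1) ->
  p n <= INR n / INR (S n) ->
  (forall j : nat, (1 <= j <= n - 1)%nat ->
     p j / INR j <= p (S j) / INR (S j) /\
     (1 - p j) / INR (S n - j) <= (1 - p (S j)) / INR (n - j)) ->
  exists E : list (nat -> R),
    E <> nil /\
    (forall e, In e E -> in_Delta n e) /\
    (forall j : nat, (1 <= j <= n)%nat -> is_min_on E (psi j) (p j)).
Proof.
  intros Hn Hp Hpn H4.
  assert (Kx : forall i, (1 <= i <= n)%nat -> p i / INR i * INR (S n) <= 1).
  { intros i Hi. pose proof (chain1 n p H4 i n ltac:(lia) ltac:(lia)).
    pose proof (INR_pos n Hn). pose proof (INR_pos (S n) ltac:(lia)).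
    assert (p n * INR (S n) <= INR n).
    { unfold Rdiv in Hpn. apply Rmult_le_reg_r with (/ INR (S n)).
      apply Rinv_0_lt_compat; lra.
      rewrite Rmult_assoc, Rinv_r by lra. lra. }
    assert (p n / INR n * INR (S n) <= 1).
    { unfold Rdiv. replace (p n * / INR n * INR (S n)) with (p n * INR (S n) * / INR n) by ring.
      apply Rmult_le_reg_r with (INR n); auto.
      rewrite Rmult_assoc, Rinv_l by lra. lra. }
    nra. }
  assert (Nsub : forall i, (i <= n)%nat -> INR (S n - i) = INR (S n) - INR i).
  { intros; apply minus_INR; lia. }
  assert (Kxy : forall i, (1 <= i <= n)%nat ->
     p i / INR i <= (1 - p i) / INR (S n - i)).
  { intros i Hi. specialize (Kx i Hi). rewrite Nsub by lia.
    pose proof (INR_pos i ltac:(lia)). pose proof (le_INR i n ltac:(lia)).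
    rewrite S_INR in *.
    set (x := p i / INR i) in *.
    assert (p i = INR i * x) by (unfold x; field; lra).
    rewrite H1. unfold Rdiv.
    apply Rmult_le_reg_r with (INR n + 1 - INR i). lra.
    rewrite Rmult_assoc, Rinv_l by lra. nra. }
  assert (Ksum : forall i, (1 <= i <= n)%nat ->
     INR i * (p i / INR i) + INR (S n - i) * ((1 - p i) / INR (S n - i)) = 1).
  { intros i Hi. rewrite Nsub by lia.
    pose proof (INR_pos i ltac:(lia)). pose proof (le_INR i n ltac:(lia)).
    rewrite S_INR in *. field. lra. }
  exists (map (ept n p) (seq 1 n)).
  split; [| split].
  - destruct n; [lia|]. simpl; discriminate.
  - intros e He. apply in_map_iff in He. destruct He as [i [<- Hi]].
    apply in_seq in Hi.
    split; [| split].
    + unfold ept. replace (Nat.leb 1 i) with true by (symmetry; apply Nat.leb_le; lia).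
      pose proof (INR_pos i ltac:(lia)). destruct (Hp i ltac:(lia)).
      unfold Rdiv; apply Rmult_le_pos; auto. left; apply Rinv_0_lt_compat; auto.
    + intros m Hm. unfold ept.
      destruct (Nat.leb m i) eqn:E1; destruct (Nat.leb (S m) i) eqn:E2.
      * lra.
      * apply Kxy; lia.
      * apply Nat.leb_gt in E1; apply Nat.leb_le in E2; lia.
      * lra.
    + replace (S n) with (i + (S n - i))%nat by lia. rewrite sum_high.
      replace (i + (S n - i))%nat with (S n) by lia. apply Ksum; lia.
  - intros j Hj. split.
    + exists (ept n p j). split.
      * apply in_map. apply in_seq; lia.
      * unfold psi. rewrite sum_low by lia. pose proof (INR_pos j ltac:(lia)). field; lra.
    + intros e He. apply in_map_iff in He. destruct He as [i [<- Hi]].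
      apply in_seq in Hi. unfold psi.
      destruct (Nat.le_gt_cases j i).
      * rewrite sum_low by lia.
        pose proof (chain1 n p H4 j i ltac:(lia) ltac:(lia)).
        pose proof (INR_pos j ltac:(lia)).
        replace (p j) with (INR j * (p j / INR j)) at 1 by (field; lra).
        apply Rmult_le_compat_l; lra.
      * replace j with (i + (j - i))%nat by lia. rewrite sum_high.
        replace (i + (j - i))%nat with j by lia.
        pose proof (chain2 n p H4 i j ltac:(lia) ltac:(lia)) as C.
        pose proof (Ksum i ltac:(lia)).
        pose proof (Ksum j ltac:(lia)).
        assert (INR (j - i) = INR (S n - i) - INR (S n - j)) as Ej.
        { rewrite !minus_INR by lia. ring. }
        rewrite Ej.
        assert (0 <= INR (S n - j)) by apply pos_INR.
        assert (INR (S n - j) * ((1 - p i) / INR (S n - i)) <=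
                INR (S n - j) * ((1 - p j) / INR (S n - j))) by
          (apply Rmult_le_compat_l; lra).
        pose proof (INR_pos j ltac:(lia)).
        assert (INR j * (p j / INR j) = p j) by (field; lra).
        lra.
Qed.
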